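(* Let $0\le\delta,\epsilon<1$, integers $d\ge0$, $n>0$, $m>1$, let $\psi_{AB}$ be an $m$-dimensional noisy maximally entangled state, and let $P,Q\in\mathcal{H}_m^{\otimes n}$ satisfy $\|P\|'_2\le1$, $\|Q\|'_2\le1$, $\|P^{>d}\|'^2_2\le\delta$, $\|Q^{>d}\|'^2_2\le\delta$. Let $\mathcal{A}=\{\mathcal{A}_i\}$, $\mathcal{B}=\{\mathcal{B}_i\}$ be standard orthonormal bases of $\mathcal{M}_m$ with $\mathrm{Tr}((\mathcal{A}_i\otimes\mathcal{B}_j)\psi_{AB})=c_i\delta_{i,j}$ for $i,j\in\{0,\ldots,m^2-1\}$, where $c_0\ge c_1\ge\cdots\ge c_{m^2-1}\ge0$ are the singular values of the correlation matrix, and write $P=\sum_\sigma\widehat P(\sigma)\mathcal{A}_\sigma$, $Q=\sum_\sigma\widehat Q(\sigma)\mathcal{B}_\sigma$. Then there is a set $H\subseteq[n]$ with $h=|H|\le\frac{2d}{\epsilon}$ such that $\mathrm{Inf}_i(P^{\le d})\le\epsilon$ and $\mathrm{Inf}_i(Q^{\le d})\le\epsilon$ for all $i\notin H$, and $$\mathrm{Tr}((P\otimes Q)\psi_{AB}^{\otimes n})=\sum_{\sigma\in\{0,\ldots,m^2-1\}^H}c_\sigma\,\mathrm{Tr}((P_\sigma\otimes Q_\sigma)\psi_{AB}^{\otimes(n-h)}),$$ where $c_\sigma=\prod_{i\in H}c_{\sigma_i}$, $P_\sigma=\sum_{\tau:\tau_H=\sigma}\widehat P(\tau)\mathcal{A}_{\tau_{H^c}}$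 and $Q_\sigma=\sum_{\tau:\tau_H=\sigma}\widehat Q(\tau)\mathcal{B}_{\tau_{H^c}}$ (operators on the registers in $H^c=[n]\setminus H$).
   Context: A standard orthonormal basis of $\mathcal{M}_m$ is an orthonormal basis (w.r.t. $\frac1m\mathrm{Tr}X^\dagger Y$) of Hermitian matrices with $\mathcal{B}_0=\mathrm{id}_m$; for $\sigma\in\{0,\ldots,m^2-1\}^n$, $\mathcal{B}_\sigma=\bigotimes_i\mathcal{B}_{\sigma_i}$, $|\sigma|=|\{i:\sigma_i\ne0\}|$, and $\tau_H$ denotes the restriction of $\tau$ to coordinates in $H$. Such bases with diagonal correlation exist. $\|X\|'_2=(\frac1{m^n}\mathrm{Tr}X^\dagger X)^{1/2}$. For $X=\sum_\sigma\widehat X(\sigma)\mathcal{B}_\sigma$: $X^{\le d}=\sum_{|\sigma|\le d}\widehat X(\sigma)\mathcal{B}_\sigma$, $X^{>d}=\sum_{|\sigma|>d}\widehat X(\sigma)\mathcal{B}_\sigma$, and $\mathrm{Inf}_i(X)=\sum_{\sigma:\sigma_i\ne0}|\widehat X(\sigma)|^2$ (all basis-independent). A noisy maximally entangled state is a state on $\mathbb{C}^m\otimes\mathbb{C}^m$ with maximally mixed marginals and maximal correlation $\rho(\psi_{AB})=\sup\{|\mathrm{Tr}((P^\dagger\otimes Q)\psi_{AB})|:\mathrm{Tr}P=\mathrm{Tr}Q=0,\ \tfrac1m\mathrm{Tr}P^\dagger P=\tfrac1m\mathrm{Tr}Q^\dagger Q=1\}<1$. *)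

(* Defs.v *)
From HB Require Import structures.
From mathcomp Require Import all_boot all_order all_algebra.
From mathcomp Require Import complex.
From mathcomp Require Import boolp classical_sets reals.

Set Implicit Arguments.
Unset Strict Implicit.
Unset Printing Implicit Defensive.

Import Order.TTheory GRing.Theory Num.Theory.
Local Open Scope ring_scope.

Notation Cx R := (R[i]).
Definition toC {R : realType} (x : R) : Cx R := real_complex R x.

Definition mat (R : realType) (T : finType) := T -> T -> Cx R.

Section Ops.
Context {R : realType}.

Definition mtr {T : finType} (X : mat R T) : Cx R := \sum_(x : T) X x x.
Definition madj {T : finType} (X : mat R T) : mat R T := fun x y => conjc (X y x).
Definition mmul {T : finType} (X Y : mat R T) : mat R T :=
  fun x y => \sum_(z : T) X x z * Y z y.
Definition mid {T : finType} : mat R T := fun x y => (x == y)%:R.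
Definition is_hermitian {T : finType} (X : mat R T) : Prop :=
  forall x y, X x y = conjc (X y x).
Definition mtens {S T : finType} (X : mat R S) (Y : mat R T) : mat R (S * T)%type :=
  fun u v => X u.1 v.1 * Y u.2 v.2.
Definition is_psd {T : finType} (X : mat R T) : Prop :=
  forall v : T -> Cx R, 0 <= \sum_(u : T) \sum_(w : T) conjc (v u) * X u w * v w.
End Ops.

Section Quantum.
Context {R : realType} (m : nat).

(* computational basis of the registers indexed by I: (C^m)^{(x) I} *)
Definition idx (I : finType) := {ffun I -> 'I_m}.
Definition midx (I : finType) := {ffun I -> 'I_(m ^ 2)}.

Definition ptrB (psi : mat R ('I_m * 'I_m)%type) : mat R 'I_m :=
  fun a a' => \sum_(b : 'I_m) psi (a, b) (a', b).
Definition ptrA (psi : mat R ('I_m * 'I_m)%type) : mat R 'I_m :=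
  fun b b' => \sum_(a : 'I_m) psi (a, b) (a, b').

Definition is_state (psi : mat R ('I_m * 'I_m)%type) : Prop :=
  is_psd psi /\ mtr psi = 1.

Definition max_corr (psi : mat R ('I_m * 'I_m)%type) : R :=
  sup [set r : R | exists (P Q : mat R 'I_m),
         [/\ mtr P = 0, mtr Q = 0,
             (m%:R)^-1 * mtr (mmul (madj P) P) = 1,
             (m%:R)^-1 * mtr (mmul (madj Q) Q) = 1 &
             r = complex.Re `| mtr (mmul (mtens (madj P) Q) psi) | ] ].

Definition noisy_max_ent (psi : mat R ('I_m * 'I_m)%type) : Prop :=
  [/\ is_state psi,
      (forall a a', ptrB psi a a' = (m%:R)^-1 * mid a a'),
      (forall b b', ptrA psi b b' = (m%:R)^-1 * mid b b') &
      max_corr psi < 1].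

Definition std_onb (A : 'I_(m ^ 2) -> mat R 'I_m) : Prop :=
  [/\ (forall i : 'I_(m ^ 2), val i = 0%N -> forall a b, A i a b = mid a b),
      (forall i, is_hermitian (A i)) &
      (forall i j, (m%:R)^-1 * mtr (mmul (madj (A i)) (A j)) = (i == j)%:R)].

Definition bprod {I : finType} (A : 'I_(m ^ 2) -> mat R 'I_m) (s : midx I)
  : mat R (idx I) := fun x y => \prod_(i : I) A (s i) (x i) (y i).

Definition wt {I : finType} (s : midx I) : nat := #|[pred i | val (s i) != 0%N]|.

Definition norm2' {I : finType} (X : mat R (idx I)) : R :=
  Num.sqrt (complex.Re ((m%:R ^+ #|I|)^-1 * mtr (mmul (madj X) X))).

Definition high_part {I : finType} (A : 'I_(m ^ 2) -> mat R 'I_m)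
  (Xh : midx I -> Cx R) (d : nat) : mat R (idx I) :=
  fun x y => \sum_(s : midx I | (d < wt s)%N) Xh s * bprod A s x y.
Definition low_coef {I : finType} (Xh : midx I -> Cx R) (d : nat) :
  midx I -> Cx R := fun s => if (wt s <= d)%N then Xh s else 0.

Definition infl {I : finType} (Xh : midx I -> Cx R) (i : I) : R :=
  complex.Re (\sum_(s : midx I | val (s i) != 0%N) `|Xh s| ^+ 2).

(* Tr((P (x) Q) psi^{(x) I}), the A-registers and B-registers being grouped *)
Definition psipow {I : finType} (psi : mat R ('I_m * 'I_m)%type) :
  mat R (idx I * idx I)%type :=
  fun u v => \prod_(i : I) psi (u.1 i, u.2 i) (v.1 i, v.2 i).
Definition corr_val {I : finType} (psi : mat R ('I_m * 'I_m)%type)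
  (P Q : mat R (idx I)) : Cx R := mtr (mmul (mtens P Q) (psipow psi)).

Definition restrH {n : nat} (H : {set 'I_n}) (t : midx 'I_n) :
  midx {i : 'I_n | i \in H} := [ffun i => t (val i)].
Definition restrHc {n : nat} (H : {set 'I_n}) (t : midx 'I_n) :
  midx {i : 'I_n | i \notin H} := [ffun i => t (val i)].

Definition slice_op {n : nat} (H : {set 'I_n}) (A : 'I_(m ^ 2) -> mat R 'I_m)
  (Xh : midx 'I_n -> Cx R) (s : midx {i : 'I_n | i \in H}) :
  mat R (idx {i : 'I_n | i \notin H}) :=
  fun x y => \sum_(t : midx 'I_n | restrH H t == s) Xh t * bprod A (restrHc H t) x y.

End Quantum.

Arguments restrH m {n} H t.
Arguments restrHc m {n} H t.
Arguments slice_op {R m n} H A Xh s _ _.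

(* Main.v *)
Require Import Defs.
From HB Require Import structures.
From mathcomp Require Import all_boot all_order all_algebra.
From mathcomp Require Import complex.
From mathcomp Require Import boolp classical_sets reals.
From mathcomp Require Import ring lra.
Import Order.TTheory GRing.Theory Num.Theory.
Local Open Scope ring_scope.

Section H.
Context {R : realType}.
Notation C := (Cx R).

Lemma sum_ffun_prod (I J : finType) (F : I -> J -> C) :
  \sum_(f : {ffun I -> J}) \prod_(i : I) F i (f i) = \prod_(i : I) \sum_(j : J) F i j.
Proof. by rewrite bigA_distr_bigA. Qed.

Lemma sum4_ffun_prod (I J : finType) (F : I -> J -> J -> J -> J -> C) :
  \sum_(f1 : {ffun I -> J}) \sum_(f2 : {ffun I -> J}) \sum_(f3 : {ffun I -> J})
  \sum_(f4 : {ffun I -> J}) \prod_(i : I) F i (f1 i) (f2 i) (f3 i) (f4 i)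
  = \prod_(i : I) \sum_(a : J) \sum_(b : J) \sum_(c : J) \sum_(d : J) F i a b c d.
Proof.
rewrite -sum_ffun_prod; apply: eq_bigr => f1 _.
rewrite -sum_ffun_prod; apply: eq_bigr => f2 _.
rewrite -sum_ffun_prod; apply: eq_bigr => f3 _.
by rewrite -sum_ffun_prod.
Qed.

Lemma sum_pair (T1 T2 : finType) (F : T1 * T2 -> C) :
  \sum_(u : T1 * T2) F u = \sum_(a : T1) \sum_(b : T2) F (a, b).
Proof. by rewrite pair_bigA; apply: eq_bigr => -[]. Qed.

Lemma sum_pair2 (T1 T2 : finType) (F : T1 * T2 -> T1 * T2 -> C) :
  \sum_(u : T1 * T2) \sum_(v : T1 * T2) F u v =
  \sum_(a : T1) \sum_(b : T2) \sum_(a' : T1) \sum_(b' : T2) F (a, b) (a', b').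
Proof.
rewrite sum_pair; apply: eq_bigr => a _; apply: eq_bigr => b _; exact: sum_pair.
Qed.

Lemma sum_swap4 (T1 T2 T3 T4 : finType) (F : T1 -> T2 -> T3 -> T4 -> C) :
  \sum_(x : T1) \sum_(z : T2) \sum_(s : T3) \sum_(t : T4) F x z s t =
  \sum_(s : T3) \sum_(t : T4) \sum_(x : T1) \sum_(z : T2) F x z s t.
Proof.
transitivity (\sum_(x : T1) \sum_(s : T3) \sum_(t : T4) \sum_(z : T2) F x z s t).
  apply: eq_bigr => x _; rewrite exchange_big; apply: eq_bigr => s _.
  by rewrite exchange_big.
rewrite exchange_big; apply: eq_bigr => s _; by rewrite exchange_big.
Qed.

Variable m : nat.

Lemma corr_expand (I : finType) (psi : mat R ('I_m * 'I_m)%type)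
  (A B : 'I_(m ^ 2) -> mat R 'I_m) (c : 'I_(m ^ 2) -> R)
  (hc : forall i j, mtr (mmul (mtens (A i) (B j)) psi) = toC (c i) * (i == j)%:R)
  (Ph Qh : midx m I -> C) :
  corr_val psi (fun x y => \sum_s Ph s * bprod A s x y)
               (fun x y => \sum_t Qh t * bprod B t x y)
  = \sum_s Ph s * Qh s * toC (\prod_i c (s i)).
Proof.
rewrite /corr_val /mtr /mmul /mtens /psipow.
have E : forall s t : midx m I,
  \sum_(u : idx m I * idx m I) \sum_(v : idx m I * idx m I)
    bprod A s u.1 v.1 * bprod B t u.2 v.2 *
    \prod_i psi (v.1 i, v.2 i) (u.1 i, u.2 i)
  = \prod_i (toC (c (s i)) * (s i == t i)%:R).
  move=> s t; rewrite -(eq_bigr _ (fun i _ => hc (s i) (t i))).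
  rewrite sum_pair2.
  rewrite /= /bprod.
  under eq_bigr => a _ do under eq_bigr => b _ do under eq_bigr => a' _ do
     under eq_bigr => b' _ do rewrite -!big_split /=.
  rewrite (@sum4_ffun_prod _ _ (fun i a b a2 b2 => A (s i) a a2 * B (t i) b b2 * psi (a2, b2) (a, b))); apply: eq_bigr => i _.
  rewrite /mtr /mmul /mtens sum_pair2.
  by [].
transitivity (\sum_s \sum_t Ph s * Qh t * (\sum_(u : idx m I * idx m I) \sum_(v : idx m I * idx m I)
    bprod A s u.1 v.1 * bprod B t u.2 v.2 *
    \prod_i psi (v.1 i, v.2 i) (u.1 i, u.2 i))).
  under [RHS]eq_bigr => s _ do under eq_bigr => t _ do rewrite mulr_sumr.
  under [RHS]eq_bigr => s _ do under eq_bigr => t _ do under eq_bigr => u _ do rewrite mulr_sumr.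
  rewrite -sum_swap4; apply: eq_bigr => x _; apply: eq_bigr => z _.
  rewrite big_distrlr mulr_suml; apply: eq_bigr => s _; rewrite mulr_suml; apply: eq_bigr => t _.
  by rewrite /=; ring.
apply: eq_bigr => s _; rewrite (bigD1 s) //= E [X in _ + X]big1 ?addr0.
  by rewrite /toC rmorph_prod; congr (_ * _); apply: eq_bigr => i _; rewrite eqxx mulr1.
move=> t /negbTE nts; rewrite E; have [i ni] : exists i, s i != t i.
  by apply/existsP; apply: contraFT nts => /existsPn H; apply/eqP/ffunP => i; apply/eqP; have := H i; rewrite negbK eq_sym.
by rewrite (bigD1 i) //= (negbTE ni) mulr0 mul0r mulr0.
Qed.

Lemma slice_expand (n : nat) (H : {set 'I_n}) (A : 'I_(m ^ 2) -> mat R 'I_m)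
  (Xh : midx m 'I_n -> C) (s : midx m {i : 'I_n | i \in H}) :
  slice_op H A Xh s = fun x y => \sum_(s' : midx m {i : 'I_n | i \notin H})
     (\sum_(t | (restrH m H t == s) && (restrHc m H t == s')) Xh t) * bprod A s' x y.
Proof.
apply: funext => x; apply: funext => y; rewrite /slice_op.
rewrite (partition_big (restrHc m H) xpredT) //=; apply: eq_bigr => s' _.
rewrite mulr_suml; apply: eq_bigr => t /andP[_ /eqP ->] //.
Qed.

Lemma restr_inj (n : nat) (H : {set 'I_n}) (t t' : midx m 'I_n) :
  restrH m H t = restrH m H t' -> restrHc m H t = restrHc m H t' -> t = t'.
Proof.
move=> e1 e2; apply/ffunP => i; case: (boolP (i \in H)) => iH.
  by move/ffunP: e1 => /(_ (exist _ i iH)); rewrite !ffunE.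
by move/ffunP: e2 => /(_ (exist _ i iH)); rewrite !ffunE.
Qed.

Lemma prod_split (n : nat) (H : {set 'I_n}) (F : 'I_n -> C) :
  (\prod_(i : {i : 'I_n | i \in H}) F (val i)) *
  (\prod_(i : {i : 'I_n | i \notin H}) F (val i)) = \prod_i F i.
Proof.
rewrite [RHS](bigID (fun i => i \in H)) /=; congr (_ * _).
  by rewrite -big_sub.
by rewrite (big_sub [pred i | i \notin H]).
Qed.

Lemma prod_splitR (n : nat) (H : {set 'I_n}) (F : 'I_n -> R) :
  (\prod_(i : {i : 'I_n | i \in H}) F (val i)) *
  (\prod_(i : {i : 'I_n | i \notin H}) F (val i)) = \prod_i F i.
Proof.
rewrite [RHS](bigID (fun i => i \in H)) /=; congr (_ * _).
  by rewrite -big_sub.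
by rewrite (big_sub [pred i | i \notin H]).
Qed.

Lemma sum_single (T : finType) (p : pred T) (f g : T -> C) :
  (forall t t', p t -> p t' -> t = t') ->
  (\sum_(t | p t) f t) * (\sum_(t | p t) g t) = \sum_(t | p t) f t * g t.
Proof.
move=> hp; rewrite mulr_suml; apply: eq_bigr => t pt.
rewrite (bigD1 t) //= big1 ?addr0 // => t' /andP[pt' nt].
by rewrite (hp _ _ pt pt') eqxx in nt.
Qed.

Lemma decomp (n : nat) (H : {set 'I_n}) (psi : mat R ('I_m * 'I_m)%type)
  (A B : 'I_(m ^ 2) -> mat R 'I_m) (c : 'I_(m ^ 2) -> R)
  (hc : forall i j, mtr (mmul (mtens (A i) (B j)) psi) = toC (c i) * (i == j)%:R)
  (Ph Qh : midx m 'I_n -> C) (P Q : mat R (idx m 'I_n))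
  (hP : forall x y, P x y = \sum_(s : midx m 'I_n) Ph s * bprod A s x y)
  (hQ : forall x y, Q x y = \sum_(s : midx m 'I_n) Qh s * bprod B s x y) :
  corr_val psi P Q =
        \sum_(s : midx m {i : 'I_n | i \in H})
           toC (\prod_(i : {i : 'I_n | i \in H}) c (s i)) *
           corr_val psi (slice_op H A Ph s) (slice_op H B Qh s).
Proof.
have -> : P = (fun x y => \sum_(s : midx m 'I_n) Ph s * bprod A s x y).
  by apply: funext => x; apply: funext => y.
have -> : Q = (fun x y => \sum_(s : midx m 'I_n) Qh s * bprod B s x y).
  by apply: funext => x; apply: funext => y.
rewrite (corr_expand _ _ _ _ _ hc).
under [RHS]eq_bigr => s _ do rewrite !slice_expand (corr_expand _ _ _ _ _ hc).
pose G t := Ph t * Qh t * toC (\prod_i c (t i)).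
transitivity (\sum_(s : midx m {i : 'I_n | i \in H}) \sum_(s' : midx m {i : 'I_n | i \notin H})
   \sum_(t | (restrH m H t == s) && (restrHc m H t == s')) G t).
  rewrite (partition_big (restrH m H) xpredT) //=; apply: eq_bigr => s _.
  rewrite (partition_big (restrHc m H) xpredT) //=; apply: eq_bigr => s' _.
apply: eq_bigr => s _; rewrite mulr_sumr; apply: eq_bigr => s' _.
rewrite sum_single; last first.
  move=> t t0 /andP[/eqP e1 /eqP e2] /andP[/eqP e3 /eqP e4].
  by rewrite -e3 in e1; rewrite -e4 in e2; exact: restr_inj e1 e2.
rewrite mulr_suml mulr_sumr; apply: eq_bigr => t /andP[/eqP <- /eqP <-].
rewrite /G -(prod_splitR _ H (fun i => c (t i))) /toC rmorphM /=.
have -> : \prod_(i : {i : 'I_n | i \in H}) c (restrH m H t i) = \prod_(i : {i : 'I_n | i \in H}) c (t (val i)).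
  by apply: eq_bigr => i _; rewrite ffunE.
have -> : \prod_(i : {i : 'I_n | i \notin H}) c (restrHc m H t i) = \prod_(i : {i : 'I_n | i \notin H}) c (t (val i)).
  by apply: eq_bigr => i _; rewrite ffunE.
by ring.
Qed.

Lemma sum2_ffun_prod (I J K : finType) (F : I -> J -> K -> C) :
  \sum_(f : {ffun I -> J}) \sum_(g : {ffun I -> K}) \prod_(i : I) F i (f i) (g i)
  = \prod_(i : I) \sum_(j : J) \sum_(k : K) F i j k.
Proof.
rewrite -sum_ffun_prod; apply: eq_bigr => f _.
by rewrite -sum_ffun_prod.
Qed.

Lemma parseval (I : finType) (A : 'I_(m ^ 2) -> mat R 'I_m) (hA : std_onb A)
  (Ph : midx m I -> C) (X : mat R (idx m I))
  (hX : forall x y, X x y = \sum_(s : midx m I) Ph s * bprod A s x y) :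
  (0 < m)%N ->
  (m%:R ^+ #|I|)^-1 * mtr (mmul (madj X) X) = \sum_s `|Ph s| ^+ 2.
Proof.
move=> m0; case: hA => _ _ hon.
have hon' : forall i j, mtr (mmul (madj (A i)) (A j)) = m%:R * (i == j)%:R.
  move=> i j; rewrite -(hon i j) mulrA mulfV ?mul1r // pnatr_eq0 -lt0n //.
have E : forall s t : midx m I,
  \sum_(x : idx m I) \sum_(z : idx m I) conjc (bprod A s z x) * bprod A t z x
  = \prod_i (m%:R * (s i == t i)%:R).
  move=> s t; under [LHS]eq_bigr => x _ do under eq_bigr => z _ do rewrite /bprod rmorph_prod -big_split /=.

  rewrite (@sum2_ffun_prod _ _ _ (fun i a b => conjc (A (s i) b a) * A (t i) b a)).
  apply: eq_bigr => i _; rewrite -hon' /mtr /mmul /madj.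
  by rewrite exchange_big.
transitivity ((m%:R ^+ #|I|)^-1 * \sum_s \sum_t conjc (Ph s) * Ph t *
  (\sum_(x : idx m I) \sum_(z : idx m I) conjc (bprod A s z x) * bprod A t z x)).
  congr (_ * _); rewrite /mtr /mmul /madj.
  under eq_bigr => x _ do under eq_bigr => z _ do rewrite hX rmorph_sum big_distrlr /=.
  under [RHS]eq_bigr => s _ do under eq_bigr => t _ do rewrite mulr_sumr.
  under [RHS]eq_bigr => s _ do under eq_bigr => t _ do under eq_bigr => u _ do rewrite mulr_sumr.
  rewrite -sum_swap4; apply: eq_bigr => x _; apply: eq_bigr => z _.
  apply: eq_bigr => s _; apply: eq_bigr => t _; rewrite rmorphM /=; ring.
rewrite mulr_sumr; apply: eq_bigr => s _.
rewrite (bigD1 s) //= E [X in _ + X]big1 ?addr0.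
  rewrite big_split /= prodr_const.
  have -> : \prod_i ((s i == s i)%:R : C) = 1 by apply: big1 => i _; rewrite eqxx.
  rewrite mulr1 sqr_normc mulrCA mulVf ?mulr1 1?mulrC // expf_neq0 // pnatr_eq0 -lt0n //.
move=> t /negbTE nts; rewrite E; have [i ni] : exists i, s i != t i.
  by apply/existsP; apply: contraFT nts => /existsPn H; apply/eqP/ffunP => i; apply/eqP; have := H i; rewrite negbK eq_sym.
by rewrite (bigD1 i) //= (negbTE ni) mulr0 mul0r mulr0.
Qed.

Lemma ReD (x y : C) : complex.Re (x + y) = complex.Re x + complex.Re y.
Proof. by case: x => ? ?; case: y => ? ?. Qed.

Lemma Re_sum (T : finType) (F : T -> C) :
  complex.Re (\sum_t F t) = \sum_t complex.Re (F t).
Proof. by apply: (big_morph _ ReD). Qed.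

Lemma Re_le (x y : C) : x <= y -> complex.Re x <= complex.Re y.
Proof. by rewrite lecE => /andP[]. Qed.

Lemma Re_nat (k : nat) : complex.Re (k%:R : C) = k%:R.
Proof. by rewrite -(rmorph_nat (real_complex R)). Qed.

Lemma norm_le1 (v : C) : 0 <= v -> Num.sqrt (complex.Re v) <= 1 -> v <= 1.
Proof.
move=> v0 hs; rewrite lecE (ger0_Im v0) eqxx /=.
have r0 : 0 <= complex.Re v by move/Re_le: v0.
by rewrite -(ler_sqrt _ ler01) sqrtr1.
Qed.

Lemma infl_bound (I : finType) (Ph : midx m I -> C) (d : nat) :
  \sum_s `|Ph s| ^+ 2 <= 1 ->
  (forall i, 0 <= infl (low_coef Ph d) i) /\ \sum_i infl (low_coef Ph d) i <= d%:R.
Proof.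
move=> hb; split.
  move=> i; rewrite /infl; apply: (@Re_le 0); apply: sumr_ge0 => s _.
  by rewrite exprn_ge0.
rewrite /infl -Re_sum -Re_nat; apply: Re_le.
have -> : \sum_i \sum_(s : midx m I | val (s i) != 0%N) `|low_coef Ph d s| ^+ 2
   = \sum_s (wt s)%:R * `|low_coef Ph d s| ^+ 2.
  under eq_bigr => i _ do rewrite big_mkcond /=.
  rewrite exchange_big; apply: eq_bigr => s _; rewrite -big_mkcond /= sumr_const.
  by rewrite mulr_natl.
apply: (le_trans (y := \sum_s d%:R * `|Ph s| ^+ 2)).
  apply: ler_sum => s _; rewrite /low_coef; case: ifP => hw.
    by apply: ler_wpM2r; [rewrite exprn_ge0 | rewrite ler_nat].
  by rewrite normr0 expr0n /= mulr0 mulr_ge0 // exprn_ge0.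
rewrite -mulr_sumr -[X in _ <= X]mulr1; apply: ler_wpM2l => //.
Qed.
End H.

Theorem lemma7p4 (R : realType) (delta eps : R) (d n m : nat)
  (psi : mat R ('I_m * 'I_m)%type)
  (P Q : mat R (idx m 'I_n))
  (A B : 'I_(m ^ 2) -> mat R 'I_m) (c : 'I_(m ^ 2) -> R)
  (Ph Qh : midx m 'I_n -> Cx R) :
  0 <= delta < 1 -> 0 <= eps < 1 -> (0 < n)%N -> (1 < m)%N ->
  noisy_max_ent psi ->
  is_hermitian P -> is_hermitian Q ->
  norm2' P <= 1 -> norm2' Q <= 1 ->
  std_onb A -> std_onb B ->
  (forall i j, mtr (mmul (mtens (A i) (B j)) psi) = toC (c i) * (i == j)%:R) ->
  (forall i j : 'I_(m ^ 2), (i <= j)%N -> c j <= c i) ->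
  (forall i, 0 <= c i) ->
  (forall x y, P x y = \sum_(s : midx m 'I_n) Ph s * bprod A s x y) ->
  (forall x y, Q x y = \sum_(s : midx m 'I_n) Qh s * bprod B s x y) ->
  norm2' (high_part A Ph d) ^+ 2 <= delta ->
  norm2' (high_part B Qh d) ^+ 2 <= delta ->
  exists H : {set 'I_n},
    [/\ #|H|%:R * eps <= 2 * d%:R,
        (forall i : 'I_n, i \notin H ->
           infl (low_coef Ph d) i <= eps /\ infl (low_coef Qh d) i <= eps) &
        corr_val psi P Q =
        \sum_(s : midx m {i : 'I_n | i \in H})
           toC (\prod_(i : {i : 'I_n | i \in H}) c (s i)) *
           corr_val psi (slice_op H A Ph s) (slice_op H B Qh s)].

Proof.
move=> _ /andP[e0 _] _ m1 _ _ _ nP nQ hA hB hc _ _ hP hQ _ _.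
have m0 : (0 < m)%N by apply: ltn_trans m1.
have bP : \sum_s `|Ph s| ^+ 2 <= 1.
  apply: norm_le1; first by apply: sumr_ge0 => s _; rewrite exprn_ge0.
  by move: nP; rewrite /norm2' (parseval _ _ _ hA _ _ hP m0).
have bQ : \sum_s `|Qh s| ^+ 2 <= 1.
  apply: norm_le1; first by apply: sumr_ge0 => s _; rewrite exprn_ge0.
  by move: nQ; rewrite /norm2' (parseval _ _ _ hB _ _ hQ m0).
have [P0 Ps] := infl_bound _ _ _ d bP.
have [Q0 Qs] := infl_bound _ _ _ d bQ.
set IP := infl (low_coef Ph d) in P0 Ps *.
set IQ := infl (low_coef Qh d) in Q0 Qs *.
exists [set i | (eps < IP i) || (eps < IQ i)]; split.
- rewrite mulr_natl -sumr_const.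
  apply: (le_trans (y := \sum_(i in [set i | (eps < IP i) || (eps < IQ i)]) (IP i + IQ i))).
    apply: ler_sum => i; rewrite inE => /orP[] h.
      by have := Q0 i; lra.
    by have := P0 i; lra.
  apply: (le_trans (y := \sum_i (IP i + IQ i))).
    rewrite [X in _ <= X](bigID (fun i => i \in [set i | (eps < IP i) || (eps < IQ i)])) /=.
    rewrite lerDl; apply: sumr_ge0 => i _; by have := P0 i; have := Q0 i; lra.
  by rewrite big_split /=; lra.
- move=> i; rewrite inE negb_or => /andP[h1 h2]; split.
    by rewrite leNgt.
  by rewrite leNgt.
- exact: decomp.
Qed.
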